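(* Let $V:\mathbb{R}\to\mathbb{R}$ be $C^2$, $I_1>0$, $\delta\in\mathbb{R}$, and consider on $\mathbb{R}^3\times\mathbb{R}^3\ni(\bm{a},\bm{l})$ the vector field \[ \dot{\bm{a}}=-\bm{a}\times\nabla_{\bm{l}}H,\qquad \dot{\bm{l}}=-\bm{a}\times\nabla_{\bm{a}}H-\bm{l}\times\nabla_{\bm{l}}H,\qquad H=\frac{1}{2I_1}\big(|\bm{l}|^2+\delta(\bm{a}\cdot\bm{l})^2\big)+V(a_z). \] For $s\in\{+1,-1\}$ and $m\in\mathbb{R}$, the point $\bm{a}=s\bm{e}_z$, $\bm{l}=m\bm{e}_z$ is an equilibrium, and the characteristic polynomial of the linearisation there is $\lambda^2P_+(\lambda)$, where \[ P_+(\lambda)=\lambda^4+\lambda^2(\kappa^2-2f)+f^2,\qquad \kappa=\frac{m}{I_1},\quad f=\frac{sV'(s)}{I_1} \] (independent of $\delta$). Consequently all roots of $P_+$ lie on the imaginary axis if and only if $\kappa^2\ge 4f$; if $\kappa^2<4f$, $P_+$ has roots with nonzero real part.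
   Context: $\bm{e}_z=(0,0,1)^t$, $a_z$ is the third component of $\bm{a}$, and $\times$ is the cross product in $\mathbb{R}^3$. *)

(* Defs.v *)
From HB Require Import structures.
From mathcomp Require Import all_boot all_order all_algebra.
From mathcomp Require Import all_classical all_reals all_analysis.
From mathcomp Require Import complex.
Set Implicit Arguments. Unset Strict Implicit. Unset Printing Implicit Defensive.
Import Order.TTheory GRing.Theory Num.Theory.
Import numFieldNormedType.Exports.
Local Open Scope ring_scope.

Section Defs.
Variable R : realType.

(* vectors of R^3 are row vectors 'rV[R]_3 ; components 0,1,2 = x,y,z *)
Definition e_z : 'rV[R]_3 := \row_(i < 3) (if val i == 2%N then 1 else 0).

Definition dot3 (u v : 'rV[R]_3) : R := \sum_(i < 3) u 0 i * v 0 i.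

Definition cross3 (u v : 'rV[R]_3) : 'rV[R]_3 :=
  \row_(i < 3)
    (if val i == 0%N then u 0 (inord 1) * v 0 (inord 2) - u 0 (inord 2) * v 0 (inord 1)
     else if val i == 1%N then u 0 (inord 2) * v 0 (inord 0) - u 0 (inord 0) * v 0 (inord 2)
     else u 0 (inord 0) * v 0 (inord 1) - u 0 (inord 1) * v 0 (inord 0)).

Definition zc (u : 'rV[R]_3) : R := u 0 (inord 2).

Definition Ham (V : R -> R) (I1 delta : R) (a l : 'rV[R]_3) : R :=
  (dot3 l l + delta * (dot3 a l) ^+ 2) / (2 * I1) + V (zc a).

Definition grad_l_H (I1 delta : R) (a l : 'rV[R]_3) : 'rV[R]_3 :=
  I1^-1 *: (l + (delta * dot3 a l) *: a).
Definition grad_a_H (V : R -> R) (I1 delta : R) (a l : 'rV[R]_3) : 'rV[R]_3 :=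
  I1^-1 *: ((delta * dot3 a l) *: l) + (derive1 V (zc a)) *: e_z.

Definition state_a (x : 'rV[R]_6) : 'rV[R]_3 := @lsubmx R 1 3 3 x.
Definition state_l (x : 'rV[R]_6) : 'rV[R]_3 := @rsubmx R 1 3 3 x.

Definition vfield (V : R -> R) (I1 delta : R) (x : 'rV[R]_6) : 'rV[R]_6 :=
  let a := state_a x in let l := state_l x in
  @row_mx R 1 3 3
    (- cross3 a (grad_l_H I1 delta a l))
    (- cross3 a (grad_a_H V I1 delta a l) - cross3 l (grad_l_H I1 delta a l)).

Definition linearisation (F : 'rV[R]_6 -> 'rV[R]_6) (x0 : 'rV[R]_6) : 'M[R]_6 :=
  \matrix_(i < 6, j < 6) derive1 (fun t : R => F (x0 + t *: delta_mx 0 j) 0 i) 0.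

Definition equil (s m : R) : 'rV[R]_6 := @row_mx R 1 3 3 (s *: e_z) (m *: e_z).

Definition Pplus (kappa f : R) : {poly R} :=
  'X^4 + (kappa ^+ 2 - 2 * f) *: 'X^2 + (f ^+ 2)%:P.

End Defs.

(* Main.v *)
Set Warnings "-notation-overridden -ambiguous-paths -deprecated -notation-incompatible-prefix".
Require Import Defs.
From HB Require Import structures.
From mathcomp Require Import all_boot all_order all_algebra.
From mathcomp Require Import all_classical all_reals all_analysis.
From mathcomp Require Import complex.
From mathcomp Require Import ring lra.
Import Order.TTheory GRing.Theory Num.Theory.
Import numFieldNormedType.Exports.
Local Open Scope ring_scope.

Section D.
Variable K : comNzRingType.
Definition m6 (x p q r : K) (i j : nat) : K :=
  match i, j with
  | 0,0 => x | 0,1 => p | 0,4 => -q | 1,0 => -p | 1,1 => x | 1,3 => q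
  | 2,2 => x | 3,1 => r | 3,3 => x | 4,0 => -r | 4,4 => x | 5,5 => x
  | _,_ => 0 end.
Definition M6 x p q r : 'M[K]_6 := \matrix_(i, j) m6 x p q r i j.

Lemma detM6 x p q r : \det (M6 x p q r) =
  x ^+ 2 * (x ^+ 4 + (p ^+ 2 - 2 * (q * r)) * x ^+ 2 + (q * r) ^+ 2).
Proof.
rewrite (expand_det_row _ (@Ordinal 6 2 isT)) !big_ord_recl big_ord0 /cofactor !mxE.
rewrite /bump /= ?mul0r ?add0r ?addr0.
rewrite (expand_det_row _ (@Ordinal 5 4 isT)) !big_ord_recl big_ord0 /cofactor !mxE.
rewrite /bump /= ?mul0r ?add0r ?addr0.
rewrite (expand_det_row _ (@Ordinal 4 2 isT)) !big_ord_recl big_ord0 /cofactor !mxE.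
rewrite /bump /= ?mul0r ?add0r ?addr0.
repeat (rewrite !(expand_det_row _ ord0) !big_ord_recl !big_ord0 /cofactor !mxE;
  rewrite /bump /= ?mul0r ?add0r ?addr0 ?mulr0).
rewrite ?det_mx00.
ring.
Qed.
End D.
Arguments M6 {K}.
Definition Fs (K : comNzRingType) (k w a0 a1 a2 l0 l1 l2 : K) (i : nat) : K :=
  match i with
  | 0 => - (k * (a1 * l2 - a2 * l1))
  | 1 => - (k * (a2 * l0 - a0 * l2))
  | 2 => - (k * (a0 * l1 - a1 * l0))
  | 3 => - (w * a1)
  | 4 => w * a0
  | _ => 0 end.

Arguments Fs {K}.
Section S.
Variable R : realType.

Lemma I3_0 : (inord 0 : 'I_3) = @Ordinal 3 0 isT. Proof. by apply/val_inj; rewrite /= inordK. Qed.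
Lemma I3_1 : (inord 1 : 'I_3) = @Ordinal 3 1 isT. Proof. by apply/val_inj; rewrite /= inordK. Qed.
Lemma I3_2 : (inord 2 : 'I_3) = @Ordinal 3 2 isT. Proof. by apply/val_inj; rewrite /= inordK. Qed.
Lemma lshift_inord (i : 'I_3) : lshift 3 i = inord i :> 'I_6.
Proof. apply/val_inj; rewrite /= inordK //; exact: (ltn_trans (ltn_ord i)). Qed.
Lemma rshift_inord (i : 'I_3) : rshift 3 i = inord i.+3 :> 'I_6.
Proof. by apply/val_inj; rewrite /= inordK // ltnS ltnS ltnS. Qed.

Lemma vfield_E (V : R -> R) I1 delta (x : 'rV[R]_6) (i : 'I_6) :
  vfield V I1 delta x 0 i =
  Fs I1^-1 (derive1 V (x 0 (inord 2))) (x 0 (inord 0)) (x 0 (inord 1)) (x 0 (inord 2))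
     (x 0 (inord 3)) (x 0 (inord 4)) (x 0 (inord 5)) i.
Proof.
rewrite /vfield /state_a /state_l /grad_l_H /grad_a_H /cross3 /dot3 /zc /e_z.
rewrite mxE; case: splitP => k Hk; rewrite Hk;
  case: k {Hk} => [[|[|[|//]]] Hk] /=;
  rewrite !big_ord_recl big_ord0 !mxE /= ?I3_0 ?I3_1 ?I3_2 ?mxE
    ?lshift_inord ?rshift_inord /=.
all: ring.
Qed.

Definition en (s m : R) (n : nat) : R := if n == 2 then s else if n == 5 then m else 0.
Definition cj (j : 'I_6) (n : nat) : R := if val j == n then 1 else 0.

Lemma pert_E (s m : R) (j : 'I_6) (t : R) (n : nat) : (n < 6)%N ->
  (equil s m + t *: delta_mx 0 j) 0 (inord n) = en s m n + t * cj j n.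
Proof.
move=> Hn; rewrite !mxE /cj /equil /=.
have -> : (inord n == j) = (val j == n) by rewrite eq_sym -(inj_eq val_inj) /= inordK.
case: (val j == n); rewrite ?mulr1 ?mulr0; congr (_ + _).
all: case: splitP => k /=; rewrite inordK // => Hk; rewrite !mxE /en.
all: case: k Hk => [[|[|[|//]]] ?] /= ->; rewrite ?addn0 ?addn1 ?addn2 /=; by rewrite ?mulr1 ?mulr0.
Qed.

Lemma Fs_w (K : comNzRingType) (k w w' a2 l0 l1 l2 : K) i :
  Fs k w 0 0 a2 l0 l1 l2 i = Fs k w' 0 0 a2 l0 l1 l2 i.
Proof. by case: i => [|[|[|[|[|i]]]]] /=; rewrite ?mulr0. Qed.

Lemma Fs_horner (k w a0 a1 a2 l0 l1 l2 : {poly R}) t i :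
  (Fs k w a0 a1 a2 l0 l1 l2 i).[t] =
  Fs k.[t] w.[t] a0.[t] a1.[t] a2.[t] l0.[t] l1.[t] l2.[t] i.
Proof. by case: i => [|[|[|[|[|i]]]]] /=; rewrite !hornerE. Qed.

Definition Pj s m (j : 'I_6) n : {poly R} := (en s m n)%:P + 'X * (cj j n)%:P.

Lemma jac_entry V I1 delta s m (i j : 'I_6) :
  linearisation (vfield V I1 delta) (equil s m) i j =
  (Fs (I1^-1)%:P (derive1 V s)%:P (Pj s m j 0) (Pj s m j 1) (Pj s m j 2)
     (Pj s m j 3) (Pj s m j 4) (Pj s m j 5) i)^`().[0].
Proof.
rewrite mxE.
set Q := Fs _ _ _ _ _ _ _ _ _.
have -> : (fun t => vfield V I1 delta (equil s m + t *: delta_mx 0 j) 0 i) = horner Q.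
  apply/funext => t; rewrite vfield_E !pert_E // /Q Fs_horner /Pj !hornerE.
  case: (eqVneq (val j) 2) => Hj.
    rewrite /cj Hj /= /en /= !mulr0 !addr0 ?add0r; exact: Fs_w.
  by rewrite /cj (negbTE Hj) /en /= !mulr0 !addr0.
by rewrite -derivE.
Qed.

Definition jv (kap q w : R) (i j : nat) : R :=
  match i, j with
  | 0,1 => - kap | 0,4 => q | 1,0 => kap | 1,3 => - q | 3,1 => - w | 4,0 => w
  | _,_ => 0 end.

Lemma lin_E V I1 delta s m :
  linearisation (vfield V I1 delta) (equil s m) =
  \matrix_(i, j) jv (I1^-1 * m) (I1^-1 * s) (derive1 V s) i j.
Proof.
apply/matrixP => i j; rewrite jac_entry mxE.
case: i => [[|[|[|[|[|[|//]]]]]] Hi]; case: j => [[|[|[|[|[|[|//]]]]]] Hj];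
  rewrite /Pj /cj /en /= !(derivM, derivD, derivN, derivB, derivC, derivX) !hornerE /=;
  ring.
Qed.
End S.
Arguments jv {R}. Arguments en {R}. Arguments cj {R}. Arguments Pj {R}.

Section C.
Variable R : realType.
Local Open Scope complex_scope.

Lemma fac_E (x y k f : R) :
  (x +i* y) ^+ 2 - f%:C + 'i * k%:C * (x +i* y) =
  (x ^+ 2 - y ^+ 2 - f - k * y) +i* (2 * x * y + k * x).
Proof.
rewrite expr2.
rewrite /real_complex_def.
do ? [ rewrite -[(_ +i* _) * (_ +i* _)]/(_ +i* _)
     | rewrite -[(_ +i* _) + (_ +i* _)]/(_ +i* _)
     | rewrite -[(_ +i* _) - (_ +i* _)]/(_ +i* _)
     | rewrite -[- (_ +i* _)]/(_ +i* _) ].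
by congr (_ +i* _); ring.
Qed.

Lemma PC_E (kappa f : R) (z : R[i]) :
  (map_poly (fun r : R => r%:C) (Pplus kappa f)).[z] =
  (z ^+ 2 - f%:C + 'i * kappa%:C * z) * (z ^+ 2 - f%:C - 'i * kappa%:C * z).
Proof.
rewrite /Pplus !rmorphD /= map_polyXn map_polyZ map_polyXn map_polyC /= !hornerE.
have -> : forall A B : R[i], (A + B) * (A - B) = A ^+ 2 - B ^+ 2 by move=> A B; ring.
rewrite !exprMn sqr_i !(rmorphB, rmorphXn, rmorphM, rmorph_nat) /=.
ring.
Qed.

Lemma re0_of_fac (x y k f : R) : 4 * f <= k ^+ 2 ->
  (x ^+ 2 - y ^+ 2 - f - k * y) +i* (2 * x * y + k * x) = 0 -> x = 0.
Proof.
move=> Hf /eqP; rewrite eq_complex /= => /andP[/eqP HA /eqP HB].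
have : x * (2 * y + k) = 0 by rewrite -HB; ring.
move/eqP; rewrite mulf_eq0 => /orP[/eqP //|/eqP Hy].
have Hy' : y = - k / 2 by lra.
rewrite Hy' in HA.
have Hx : x ^+ 2 = f - k ^+ 2 / 4 by nra.
have : x ^+ 2 <= 0 by rewrite Hx; lra.
by rewrite -real_normK ?num_real // => H; apply/normr0_eq0/eqP; rewrite -sqrf_eq0 eq_le H sqr_ge0.
Qed.

Lemma PC_root_re (kappa f : R) (z : R[i]) : 4 * f <= kappa ^+ 2 ->
  root (map_poly (fun r : R => r%:C) (Pplus kappa f)) z -> complex.Re z = 0.
Proof.
move=> Hf; rewrite /root PC_E mulf_eq0 => /orP[] /eqP; case: z => x y /=.
  by rewrite fac_E; exact: (@re0_of_fac _ _ _ _ Hf).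
rewrite -mulNr -mulrN.
have -> : - kappa%:C = (- kappa)%:C :> R[i] by rewrite rmorphN.
rewrite fac_E; apply: (@re0_of_fac _ _ (- kappa)); lra.
Qed.

Lemma PC_root_ex (kappa f : R) : kappa ^+ 2 < 4 * f ->
  exists z : R[i], root (map_poly (fun r : R => r%:C) (Pplus kappa f)) z /\ complex.Re z != 0.
Proof.
move=> Hf; set r := Num.sqrt (4 * f - kappa ^+ 2).
have Hr : 0 < r by rewrite sqrtr_gt0; lra.
have Hr2 : r ^+ 2 = 4 * f - kappa ^+ 2 by rewrite sqr_sqrtr //; lra.
exists ((r / 2) +i* (- kappa / 2)); split; last by rewrite /=; lra.
rewrite /root PC_E fac_E.
have -> : (r / 2) ^+ 2 - (- kappa / 2) ^+ 2 - f - kappa * (- kappa / 2) = 0.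
  rewrite -[f](_ : (r ^+ 2 + kappa ^+ 2) / 4 = f); first by field.
  by rewrite Hr2; field.
have -> : 2 * (r / 2) * (- kappa / 2) + kappa * (r / 2) = 0 by field.
by rewrite mul0r.
Qed.

Lemma PC_iff (kappa f : R) :
  (forall z : R[i], root (map_poly (fun r : R => r%:C) (Pplus kappa f)) z -> complex.Re z = 0)
  <-> 4 * f <= kappa ^+ 2.
Proof.
split; last by move=> H z; exact: PC_root_re.
move=> H; rewrite leNgt; apply/negP => /PC_root_ex [z [Hz Hre]].
by move: Hre; rewrite (H z Hz) eqxx.
Qed.
End C.

Lemma equil_E (R : realType) (s m : R) n : (n < 6)%N -> equil s m 0 (inord n) = en s m n.
Proof.
move=> Hn; have := @pert_E R s m ord0 0 n Hn.
by rewrite scale0r addr0 mul0r addr0.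
Qed.

Local Open Scope classical_set_scope.

Theorem mainTheorem3 (R : realType) (V : R -> R) (I1 delta s m : R) :
  (forall x : R, derivable V x 1) ->
  (forall x : R, derivable (derive1 V) x 1) ->
  continuous (derive1n 2 V) ->
  0 < I1 ->
  (s = 1 \/ s = -1) ->
  let kappa := m / I1 in
  let f := s * derive1 V s / I1 in
  let P := Pplus kappa f in
  let PC := map_poly (fun r : R => (r%:C)%C) P in
  [/\ vfield V I1 delta (equil s m) = 0,
      char_poly (linearisation (vfield V I1 delta) (equil s m)) = 'X^2 * P,
      (forall z : R[i], root PC z -> complex.Re z = 0) <-> 4 * f <= kappa ^+ 2
    & kappa ^+ 2 < 4 * f -> exists z : R[i], root PC z /\ complex.Re z != 0].
Proof.
move=> _ _ _ HI _ kappa f P PC; split.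
- apply/rowP => i; rewrite vfield_E !equil_E // /en /= mxE.
  by case: i => [[|[|[|[|[|[|//]]]]]] Hi] /=; ring.
- rewrite lin_E /char_poly.
  have -> : char_poly_mx (\matrix_(i, j) jv (I1^-1 * m) (I1^-1 * s) (derive1 V s) i j)
      = M6 'X (I1^-1 * m)%:P (I1^-1 * s)%:P (derive1 V s)%:P.
    apply/matrixP => i j; rewrite !mxE.
    by case: i => [[|[|[|[|[|[|//]]]]]] Hi]; case: j => [[|[|[|[|[|[|//]]]]]] Hj];
      rewrite /= ?mulr1n ?mulr0n ?polyC0 ?subr0 ?sub0r ?polyCN ?opprK.
  rewrite detM6 /P /Pplus /f /kappa -mul_polyC.
  rewrite !(rmorphB, rmorphXn, rmorphM, rmorph_nat, rmorphN) /=.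
  ring.
- exact: PC_iff.
- exact: PC_root_ex.
Qed.
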